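(* Let $B>0$. Consider the directed exponential network model with interaction effect on nodes $\{1,\dots,n\}$: for each pair $i<j\le n$ the pair $Y_{ij}=(a_{ij},a_{ji})\in\{0,1\}^2$ (where $a_{ij}=1$ indicates an edge from $i$ to $j$) is drawn, independently over pairs, from $$ g(a_{ij},a_{ji};\alpha_i,\beta_i,\alpha_j,\beta_j,\rho)=\frac{\exp\{(\alpha_i+\beta_j)a_{ij}+(\beta_i+\alpha_j)a_{ji}+\rho\, a_{ij}a_{ji}\}}{Z(\alpha_i,\beta_i,\alpha_j,\beta_j,\rho)}, $$ with $Z$ the normalizing constant, at true parameters $\alpha^*_i,\beta^*_i,\rho^*$, all lying in $[-B,B]$, with the identification normalization $\alpha^*_1=0$. Let $(\hat{\boldsymbol\alpha},\hat{\boldsymbol\beta},\hat\rho)$ be the maximum likelihood estimator, normalized by $\hat\alpha_1=0$. Set $\Delta\alpha=\frac1n\sum_{i\le n}(\hat\alpha_i-\alpha^*_i)$ and $\Delta\beta=\frac1n\sum_{i\le n}(\hat\beta_i-\beta^*_i)$. Then, as $n\to\infty$: (i) $(\hat\rho-\rho^* )^2=O_p(n^{-1/2}(\log n)^2)$; (ii) $(\Delta\alpha+\Delta\beta)^2=O_p(n^{-1/2}(\log n)^2)$; (iii) $\|\hat{\boldsymbol\alpha}-\boldsymbol\alpha^*-\Delta\alpha\|_2^2+\|\hat{\boldsymbol\beta}-\boldsymbol\beta^*-\Delta\beta\|_2^2=O_p(n^{1/2}(\log n)^2)$, where $\mathbf v-x$ denotes subtracting the scalar $x$ from every coordinate of $\mathbf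 v$.
   Context: The parameters $(\boldsymbol\alpha,\boldsymbol\beta,\rho)$ and $(\boldsymbol\alpha-x,\boldsymbol\beta+x,\rho)$ define the same model for every real $x$, which is why the normalization $\alpha_1=0$ is imposed. The maximum likelihood estimator maximizes $\sum_{i<j}\log g(a_{ij},a_{ji};\alpha_i,\beta_i,\alpha_j,\beta_j,\rho)$ over parameters in the (compact) parameter space with all coordinates in $[-B,B]$ and $\alpha_1=0$. $O_p$ denotes stochastic boundedness as $n\to\infty$. *)

(* Defs.v *)
From HB Require Import structures.
From mathcomp Require Import all_boot all_order all_algebra.
From mathcomp Require Import all_classical all_reals all_analysis.
Set Implicit Arguments. Unset Strict Implicit. Unset Printing Implicit Defensive.
Import Order.TTheory GRing.Theory Num.Theory.
Local Open Scope ring_scope.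

(* A directed network on nodes 'I_n: a (i,j) = true iff edge i -> j.
   Diagonal entries are forced to be absent (probability 0 otherwise). *)
Definition net (n : nat) := {ffun 'I_n * 'I_n -> bool}.

Definition b2R (R : realType) (b : bool) : R := (nat_of_bool b)%:R.

Section Model.
Variable R : realType.

Definition gnum (x y : bool) (ai bi aj bj rho : R) : R :=
  expR ((ai + bj) * b2R R x + (bi + aj) * b2R R y + rho * b2R R x * b2R R y).

Definition Zc (ai bi aj bj rho : R) : R :=
  \sum_(x : bool) \sum_(y : bool) gnum x y ai bi aj bj rho.

Definition g (x y : bool) (ai bi aj bj rho : R) : R :=
  gnum x y ai bi aj bj rho / Zc ai bi aj bj rho.

Definition netP (n : nat) (alpha beta : 'I_n -> R) (rho : R) (a : net n) : R :=
  (if [forall i, ~~ a (i, i)] then 1 else 0) *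
  \prod_(i : 'I_n) \prod_(j : 'I_n | (i < j)%N)
     g (a (i, j)) (a (j, i)) (alpha i) (beta i) (alpha j) (beta j) rho.

Definition loglik (n : nat) (alpha beta : 'I_n -> R) (rho : R) (a : net n) : R :=
  \sum_(i : 'I_n) \sum_(j : 'I_n | (i < j)%N)
     ln (g (a (i, j)) (a (j, i)) (alpha i) (beta i) (alpha j) (beta j) rho).

(* parameter space: all coordinates in [-B,B], alpha_1 = 0 (node index 0) *)
Definition in_param_space (B : R) (n : nat) (alpha beta : 'I_n -> R) (rho : R) : Prop :=
  (forall i, `|alpha i| <= B) /\ (forall i, `|beta i| <= B) /\ `|rho| <= B /\
  (forall i : 'I_n, nat_of_ord i = 0%N -> alpha i = 0).

Definition param (n : nat) := (('I_n -> R) * ('I_n -> R) * R)%type.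

Definition is_mle (B : R) (n : nat) (a : net n) (th : param n) : Prop :=
  in_param_space B th.1.1 th.1.2 th.2 /\
  forall (alpha beta : 'I_n -> R) (rho : R), in_param_space B alpha beta rho ->
    loglik alpha beta rho a <= loglik th.1.1 th.1.2 th.2 a.

Definition bigOp (Pn : forall n, net n -> R) (X : forall n, net n -> R)
  (r : nat -> R) : Prop :=
  forall eps : R, 0 < eps -> exists M : R, exists N : nat, forall n : nat,
    (N <= n)%N -> \sum_(a : net n | M * r n < `|X n a|) Pn n a < eps.

End Model.

(* Main.v *)
Require Import Defs.
From HB Require Import structures.
From mathcomp Require Import all_boot all_order all_algebra.
From mathcomp Require Import all_classical all_reals all_analysis.
From mathcomp Require Import ring lra.
Set Implicit Arguments. Unset Strict Implicit. Unset Printing Implicit Defensive.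
Import Order.TTheory GRing.Theory Num.Theory.
Local Open Scope ring_scope.

Section Fact.
Variables (R : realType) (n : nat).
Notation K := ('I_n * 'I_n)%type.
Definition up (m : K) : bool := (m.1 < m.2)%N.
Definition sw (m : K) : K := (m.2, m.1).
Lemma swK : involutive sw. Proof. by case. Qed.

Definition dec (a : net n) : {ffun K -> bool * bool} :=
  [ffun m => if up m then (a m, a (sw m)) else if m.1 == m.2 then (a m, false) else (false, false)].
Definition enc (b : {ffun K -> bool * bool}) : net n :=
  [ffun m => if up m then (b m).1 else if up (sw m) then (b (sw m)).2 else (b m).1].

Lemma encK a : enc (dec a) = a.
Proof.
apply/ffunP => m; rewrite !ffunE.
case: ifP => um; first by rewrite um.
case: ifP => usm; first by rewrite usm swK.
rewrite um; case: ifP => // /eqP => hne.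
exfalso; move: um usm; rewrite /up /=; case: m hne => i j /= hne.
move/negbT; rewrite -leqNgt => h1 /negbT; rewrite -leqNgt => h2.
by apply: hne; apply: val_inj; apply/eqP; rewrite eqn_leq h1 h2.
Qed.

Variable G : K -> bool -> bool -> R.
Definition H (m : K) (z : bool * bool) : R :=
  if up m then G m z.1 z.2
  else if m.1 == m.2 then (if z.1 then 0 else 1) * (if z.2 then 0 else 1)
  else (if z == (false, false) then 1 else 0).

Definition diagR (a : net n) : R := if [forall i, ~~ a (i, i)] then 1 else 0.

Lemma diagRE a : diagR a = \prod_(m : K | ~~ up m) (if m.1 == m.2 then (if a m then 0 else 1) else 1).
Proof.
rewrite /diagR; case: ifP => h.
  rewrite big1 // => m _; case: ifP => // /eqP e.
  by case: m e => i j /= <-; move/forallP: h => h; rewrite (negbTE (h i)).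
move/negbT/forallPn: h => [i]; rewrite negbK => ai.
rewrite (bigD1 (i, i)) /=; last by rewrite /up /= ltnn.
by rewrite eqxx ai mul0r.
Qed.

Lemma fact_lem :
  \sum_(a : net n) diagR a * \prod_(m : K | up m) G m (a m) (a (sw m)) =
  \prod_(m : K | up m) \sum_(x : bool) \sum_(y : bool) G m x y.
Proof.
have step1 a : diagR a * \prod_(m : K | up m) G m (a m) (a (sw m)) =
               \prod_(m : K) H m (dec a m).
  rewrite [RHS](bigID up) /= mulrC; congr (_ * _).
    by apply: eq_bigr => m um; rewrite /H ffunE um.
  rewrite diagRE; apply: eq_bigr => m um; rewrite /H ffunE (negbTE um).
  by case: ifP => //= _; rewrite mulr1.
under eq_bigr do rewrite step1.
have step2 : \sum_(b : {ffun K -> bool * bool}) \prod_(m : K) H m (b m) =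
             \sum_(a : net n) \prod_(m : K) H m (dec a m).
  rewrite (bigID (fun b => dec (enc b) == b)) /=.
  rewrite [X in _ + X]big1 ?addr0; last first.
    move=> b hb; apply/eqP/negPn/negP => /prodf_eq0 hne.
    move/negP: hb; apply; apply/eqP/ffunP => m.
    have hm : H m (b m) != 0 by apply/negP => h0; apply: hne; exists m.
    rewrite !ffunE; move: hm; rewrite /H.
    case: ifP => um.
      have usm : up (sw m) = false.
        by move: um; rewrite /up /=; case: m => i j /= h; rewrite ltnNge ltnW.
      by rewrite usm swK um; case: (b m).
    case: ifP => dm.
      have -> : up (sw m) = false.
        by move/eqP: dm; rewrite /up /=; case: m {um} => i j /= ->; rewrite ltnn.
      case: (b m) => [x []] //=; by rewrite mulr0 eqxx.
    case: (b m =P (false, false)) => [-> // | _]; by rewrite eqxx.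
  rewrite (reindex_onto dec enc) //=.
  - by under eq_bigl => a do rewrite encK !eqxx.
  - by move=> b /eqP.
rewrite -step2 -bigA_distr_bigA /= (bigID up) /=.
rewrite [X in _ * X]big1 ?mulr1; last first.
  move=> m um; rewrite (eq_bigr (fun z => H m (z.1, z.2))); last by case.
  rewrite -(pair_bigA _ (fun x y => H m (x, y))) /= !big_bool /H /= (negbTE um).
  by case: ifP => _ /=; rewrite ?mulr0 ?mul0r ?mulr1 ?add0r ?addr0.
apply: eq_bigr => m um.
rewrite (eq_bigr (fun z => H m (z.1, z.2))); last by case.
rewrite -(pair_bigA _ (fun x y => H m (x, y))) /=.
by apply: eq_bigr => x _; apply: eq_bigr => y _; rewrite /H um.
Qed.
End Fact.

Lemma Zc_gt0 (R : realType) (ai bi aj bj r : R) : 0 < Zc ai bi aj bj r.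
Proof.
rewrite /Zc !big_bool /=.
by rewrite !addr_gt0 // expR_gt0.
Qed.

Lemma g_gt0 (R : realType) x y (ai bi aj bj r : R) : 0 < g x y ai bi aj bj r.
Proof. by rewrite /g divr_gt0 ?Zc_gt0 // /gnum expR_gt0. Qed.

Lemma g_sum1 (R : realType) (ai bi aj bj r : R) :
  \sum_x \sum_y g x y ai bi aj bj r = 1.
Proof.
have hZ := Zc_gt0 ai bi aj bj r.
rewrite /g; under eq_bigr do rewrite -mulr_suml.
by rewrite -mulr_suml -/(Zc _ _ _ _ _) divff // gt_eqF.
Qed.

Section Expect.
Variables (R : realType) (n : nat) (al be : 'I_n -> R) (rh : R).
Notation K := ('I_n * 'I_n)%type.
Definition gm (m : K) x y := g x y (al m.1) (be m.1) (al m.2) (be m.2) rh.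

Lemma netP_dyad a : netP al be rh a = diagR R a * \prod_(m : K | up m) gm m (a m) (a (sw m)).
Proof.
rewrite /netP /diagR pair_big_dep /=; congr (_ * _).
by apply: eq_big => [[i j] // | [i j] _].
Qed.

Lemma netP_ge0 a : 0 <= netP al be rh a.
Proof.
rewrite netP_dyad /diagR; apply: mulr_ge0; first by case: ifP.
by apply: prodr_ge0 => m _; apply/ltW/g_gt0.
Qed.

Lemma EP (F : K -> bool -> bool -> R) :
  \sum_a netP al be rh a * \prod_(m : K | up m) F m (a m) (a (sw m)) =
  \prod_(m : K | up m) \sum_x \sum_y gm m x y * F m x y.
Proof.
rewrite -(fact_lem (fun m x y => gm m x y * F m x y)).
apply: eq_bigr => a _; by rewrite netP_dyad -mulrA -big_split.
Qed.

Lemma E1 : \sum_a netP al be rh a = 1.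
Proof.
transitivity (\sum_a netP al be rh a * \prod_(m : K | up m) (fun _ _ _ => 1 : R) m (a m) (a (sw m))).
  by apply: eq_bigr => a _; rewrite big1_eq mulr1.
rewrite (EP (fun _ _ _ => 1)); apply: big1 => m _.
by under eq_bigr do under eq_bigr do rewrite mulr1; rewrite g_sum1.
Qed.

Lemma E_single (m0 : K) (phi : bool -> bool -> R) : up m0 ->
  \sum_a netP al be rh a * phi (a m0) (a (sw m0)) =
  \sum_x \sum_y gm m0 x y * phi x y.
Proof.
move=> u0.
pose F := fun m => if m == m0 then phi else (fun _ _ : bool => 1 : R).
transitivity (\sum_a netP al be rh a * \prod_(m : K | up m) F m (a m) (a (sw m))).
  apply: eq_bigr => a _; congr (_ * _).
  rewrite (bigD1 m0) //= /F eqxx big1 ?mulr1 // => m /andP[_ /negbTE hm].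
  by rewrite hm.
rewrite EP (bigD1 m0) //= /F eqxx [X in _ * X]big1 ?mulr1 // => m /andP[_ /negbTE hm].
by rewrite hm; under eq_bigr do under eq_bigr do rewrite mulr1; rewrite g_sum1.
Qed.

Lemma E_pair (m0 m1 : K) (phi psi : bool -> bool -> R) : up m0 -> up m1 -> m0 != m1 ->
  \sum_a netP al be rh a * (phi (a m0) (a (sw m0)) * psi (a m1) (a (sw m1))) =
  (\sum_x \sum_y gm m0 x y * phi x y) * (\sum_x \sum_y gm m1 x y * psi x y).
Proof.
move=> u0 u1 h01.
pose F := fun m => if m == m0 then phi else if m == m1 then psi else (fun _ _ : bool => 1 : R).
have u1' : up m1 && (m1 != m0) by rewrite u1 eq_sym.
transitivity (\sum_a netP al be rh a * \prod_(m : K | up m) F m (a m) (a (sw m))).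
  apply: eq_bigr => a _; congr (_ * _).
  rewrite (bigD1 m0) //= (bigD1 m1) //= /F eqxx eq_sym (negbTE h01) eqxx.
  rewrite big1 ?mulr1 // => m /andP[/andP[_ /negbTE hm] /negbTE hm1].
  by rewrite hm hm1.
rewrite EP (bigD1 m0) //= (bigD1 m1) //= /F eqxx eq_sym (negbTE h01) eqxx.
rewrite [X in _ * (_ * X)]big1 ?mulr1 // => m /andP[/andP[_ /negbTE hm] /negbTE hm1].
by rewrite hm hm1; under eq_bigr do under eq_bigr do rewrite mulr1; rewrite g_sum1.
Qed.

Lemma E_var (Z : K -> bool -> bool -> R) :
  (forall m, up m -> \sum_x \sum_y gm m x y * Z m x y = 0) ->
  \sum_a netP al be rh a * (\sum_(m | up m) Z m (a m) (a (sw m))) ^+ 2 =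
  \sum_(m | up m) \sum_x \sum_y gm m x y * Z m x y ^+ 2.
Proof.
move=> hZ.
under eq_bigr do rewrite expr2 mulr_suml mulr_sumr; rewrite exchange_big /=.
apply: eq_bigr => m um.
rewrite (eq_bigr (fun a => \sum_(i0 | up i0) netP al be rh a *
   (Z m (a m) (a (sw m)) * Z i0 (a i0) (a (sw i0))))); last by move=> a _; rewrite !mulr_sumr.
rewrite [LHS]exchange_big /=.
rewrite (bigD1 m) //= [X in _ + X]big1 ?addr0.
  rewrite -(E_single (fun x y => Z m x y ^+ 2)) //.
move=> m' /andP[um' hne].
rewrite (@E_pair m m' (Z m) (Z m')) //; last by rewrite eq_sym.
by rewrite hZ // mul0r.
Qed.
End Expect.
Section Scalar.
Variable R : realType.

Lemma ln_le_sub1 (x : R) : 0 < x -> ln x <= x - 1.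
Proof. move=> hx; have := expR_ge1Dx (ln x); rewrite lnK ?posrE //; lra. Qed.

Lemma lndiff (c p q : R) : 0 < c -> c <= p -> c <= q ->
  c ^+ 2 * (ln q - ln p) ^+ 2 <= (q - p) ^+ 2.
Proof.
move=> c0 cp cq.
have p0 : 0 < p by exact: (Order.POrderTheory.lt_le_trans c0 cp).
have q0 : 0 < q by exact: (Order.POrderTheory.lt_le_trans c0 cq).
have h1 : p * (ln q - ln p) <= q - p.
  have := ln_le_sub1 (divr_gt0 q0 p0); rewrite ln_div ?posrE // => h.
  have e : p * (q / p - 1) = q - p by field; rewrite gt_eqF.
  by rewrite -e ler_pM2l.
have h2 : q * (ln p - ln q) <= p - q.
  have := ln_le_sub1 (divr_gt0 p0 q0); rewrite ln_div ?posrE // => h.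
  have e : q * (p / q - 1) = p - q by field; rewrite gt_eqF.
  by rewrite -e ler_pM2l.
set d := ln q - ln p in h1 h2 *.
have hd : ln p - ln q = - d by rewrite /d opprB.
rewrite hd in h2.
case: (lerP 0 d) => hd0.
  have a1 : 0 <= c * d by apply: mulr_ge0; [exact: ltW|].
  have a2 : c * d <= q - p by nra.
  have : 0 <= (q - p - c * d) * (q - p + c * d) by apply: mulr_ge0; lra.
  nra.
have a1 : 0 <= c * (- d) by apply: mulr_ge0; [exact: ltW| lra].
have a2 : c * (- d) <= p - q by nra.
have : 0 <= (p - q - c * (- d)) * (p - q + c * (- d)) by apply: mulr_ge0; lra.
nra.
Qed.

Lemma kl_point (p q : R) : 0 < p -> p <= 1 -> 0 < q -> q <= 1 ->
  p * (ln q - ln p) <= (q - p) - (q - p) ^+ 2 / 4.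
Proof.
move=> p0 p1 q0 q1.
set s := Num.sqrt p; set t := Num.sqrt q.
have s0 : 0 < s by rewrite sqrtr_gt0.
have t0 : 0 < t by rewrite sqrtr_gt0.
have hs : s ^+ 2 = p by rewrite sqr_sqrtr // ltW.
have ht : t ^+ 2 = q by rewrite sqr_sqrtr // ltW.
have s1 : s <= 1 by rewrite -sqrtr1 ler_sqrt.
have t1 : t <= 1 by rewrite -sqrtr1 ler_sqrt.
have hl : ln q - ln p = 2 * (ln t - ln s).
  by rewrite -hs -ht !lnXn // !mulr2n; ring.
have h1 : s * (ln t - ln s) <= t - s.
  have := ln_le_sub1 (divr_gt0 t0 s0); rewrite ln_div ?posrE // => h.
  have e : s * (t / s - 1) = t - s by field; rewrite gt_eqF.
  by rewrite -e ler_pM2l.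
rewrite hl -hs -ht.
have e : s ^+ 2 * (2 * (ln t - ln s)) = 2 * s * (s * (ln t - ln s)) by ring.
rewrite e.
have : 2 * s * (s * (ln t - ln s)) <= 2 * s * (t - s) by rewrite ler_pM2l // mulr_gt0.
move=> h.
have : 2 * s * (t - s) <= (t ^+ 2 - s ^+ 2) - (t ^+ 2 - s ^+ 2) ^+ 2 / 4.
  have hts : (t + s) ^+ 2 <= 4 by nra.
  have : 0 <= (t - s) ^+ 2 * (4 - (t + s) ^+ 2) by apply: mulr_ge0; [exact: sqr_ge0| lra].
  move=> hh; nra.
lra.
Qed.
End Scalar.

Lemma b2RT (R : realType) : b2R R true = 1. Proof. by rewrite /b2R /=. Qed.
Lemma b2RF (R : realType) : b2R R false = 0. Proof. by rewrite /b2R /=. Qed.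

Lemma lnE (R : realType) x y (ai bi aj bj r : R) :
  ln (g x y ai bi aj bj r) =
  (ai + bj) * b2R R x + (bi + aj) * b2R R y + r * b2R R x * b2R R y - ln (Zc ai bi aj bj r).
Proof. by rewrite /g ln_div ?posrE ?expR_gt0 ?Zc_gt0 // /gnum expRK. Qed.

Definition c0 (R : realType) (B : R) := expR (- (5 * B)) / (4 * expR (5 * B)).

Lemma c0_gt0 (R : realType) (B : R) : 0 < c0 B.
Proof. by rewrite /c0 divr_gt0 ?mulr_gt0 ?expR_gt0. Qed.

Lemma g_bounds (R : realType) (B ai bi aj bj r : R) x y :
  `|ai| <= B -> `|bi| <= B -> `|aj| <= B -> `|bj| <= B -> `|r| <= B ->
  c0 B <= g x y ai bi aj bj r /\ g x y ai bi aj bj r <= 1.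
Proof.
move=> /ler_normlP[h1 h1'] /ler_normlP[h2 h2'] /ler_normlP[h3 h3'] /ler_normlP[h4 h4'] /ler_normlP[h5 h5'].
have eb x' y' : - (5 * B) <= (ai + bj) * b2R R x' + (bi + aj) * b2R R y' + r * b2R R x' * b2R R y' <= 5 * B.
  by case: x'; case: y'; rewrite ?b2RT ?b2RF; apply/andP; split; lra.
have gl x' y' : expR (- (5 * B)) <= gnum x' y' ai bi aj bj r.
  by rewrite /gnum ler_expR; case/andP: (eb x' y').
have gu x' y' : gnum x' y' ai bi aj bj r <= expR (5 * B).
  by rewrite /gnum ler_expR; case/andP: (eb x' y').
have hZ := Zc_gt0 ai bi aj bj r.
have gnum_gt0 x' y' : 0 < gnum x' y' ai bi aj bj r by rewrite /gnum expR_gt0.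
have Zu : Zc ai bi aj bj r <= 4 * expR (5 * B).
  rewrite /Zc !big_bool /=.
  have := gu true true; have := gu true false; have := gu false true; have := gu false false.
  lra.
have Zl : gnum x y ai bi aj bj r <= Zc ai bi aj bj r.
  rewrite /Zc !big_bool /=.
  have := gnum_gt0 true true; have := gnum_gt0 true false; have := gnum_gt0 false true; have := gnum_gt0 false false.
  case: x; case: y; lra.
split; last by rewrite /g ler_pdivrMr // mul1r.
rewrite /g ler_pdivlMr // /c0.
have e4 : 0 < 4 * expR (5 * B) by rewrite mulr_gt0 ?expR_gt0.
apply: (le_trans _ (gl x y)).
have : expR (- (5 * B)) / (4 * expR (5 * B)) * Zc ai bi aj bj r <=
       expR (- (5 * B)) / (4 * expR (5 * B)) * (4 * expR (5 * B)).
  by rewrite ler_pM2l // -/(c0 B) c0_gt0.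
by rewrite divfK ?gt_eqF.
Qed.

Section Dyad.
Variables (R : realType) (ai bi aj bj r ai' bi' aj' bj' r' : R).
Definition pp x y := g x y ai bi aj bj r.
Definition qq x y := g x y ai' bi' aj' bj' r'.
Definition hh x y := ln (qq x y) - ln (pp x y).
Definition E2 (f : bool -> bool -> R) := \sum_x \sum_y pp x y * f x y.
Definition UU := ai' - ai + (bj' - bj).
Definition VV := bi' - bi + (aj' - aj).
Definition WW := r' - r.

Lemma dev_id x y : hh x y - E2 hh =
  UU * (b2R R x - E2 (fun x _ => b2R R x)) + VV * (b2R R y - E2 (fun _ y => b2R R y))
  + WW * (b2R R x * b2R R y - E2 (fun x y => b2R R x * b2R R y)).
Proof.
have hs := g_sum1 ai bi aj bj r; rewrite !big_bool /= in hs.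
rewrite /E2 !big_bool /= /hh /qq /pp !lnE !b2RT !b2RF.
set L := ln (Zc ai bi aj bj r) in hs *; set L' := ln (Zc ai' bi' aj' bj' r').
set P11 := g true true ai bi aj bj r in hs *.
set P10 := g true false ai bi aj bj r in hs *.
set P01 := g false true ai bi aj bj r in hs *.
set P00 := g false false ai bi aj bj r in hs *.
have -> : P00 = 1 - P11 - P10 - P01 by lra.
rewrite /UU /VV /WW.
by case: x; case: y; rewrite ?b2RT ?b2RF; ring.
Qed.

Lemma sq2 (a b : R) : (a - b) ^+ 2 <= 2 * a ^+ 2 + 2 * b ^+ 2.
Proof.
rewrite -subr_ge0; have -> : 2 * a ^+ 2 + 2 * b ^+ 2 - (a - b) ^+ 2 = (a + b) ^+ 2 by ring.
exact: sqr_ge0.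
Qed.
Lemma sq4 (a b c d : R) : (a - b - c + d) ^+ 2 <= 4 * (a ^+ 2 + b ^+ 2 + c ^+ 2 + d ^+ 2).
Proof.
rewrite -subr_ge0.
have -> : 4 * (a ^+ 2 + b ^+ 2 + c ^+ 2 + d ^+ 2) - (a - b - c + d) ^+ 2 =
  (a + b) ^+ 2 + (a + c) ^+ 2 + (a - d) ^+ 2 + (b - c) ^+ 2 + (b + d) ^+ 2 + (c + d) ^+ 2 by ring.
by rewrite !addr_ge0 ?sqr_ge0.
Qed.

Lemma kl_bound (B : R) :
  `|ai| <= B -> `|bi| <= B -> `|aj| <= B -> `|bj| <= B -> `|r| <= B ->
  `|ai'| <= B -> `|bi'| <= B -> `|aj'| <= B -> `|bj'| <= B -> `|r'| <= B ->
  E2 hh <= - (c0 B ^+ 2 / 32) * (UU ^+ 2 + VV ^+ 2 + WW ^+ 2).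
Proof.
move=> b1 b2 b3 b4 b5 b1' b2' b3' b4' b5'.
have c0p := c0_gt0 B.
have bp x y := g_bounds x y b1 b2 b3 b4 b5.
have bq x y := g_bounds x y b1' b2' b3' b4' b5'.
have kl x y : pp x y * hh x y <= (qq x y - pp x y) - (qq x y - pp x y) ^+ 2 / 4.
  have [l1 u1] := bp x y; have [l2 u2] := bq x y.
  apply: kl_point => //; exact: (Order.POrderTheory.lt_le_trans c0p).
have ld x y : c0 B ^+ 2 * hh x y ^+ 2 <= (qq x y - pp x y) ^+ 2.
  have [l1 u1] := bp x y; have [l2 u2] := bq x y.
  exact: lndiff.
have hU : UU = hh true false - hh false false.
  by rewrite /hh /qq /pp !lnE !b2RT !b2RF /UU; ring.
have hV : VV = hh false true - hh false false.
  by rewrite /hh /qq /pp !lnE !b2RT !b2RF /VV; ring.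
have hW : WW = hh true true - hh true false - hh false true + hh false false.
  by rewrite /hh /qq /pp !lnE !b2RT !b2RF /WW; ring.
have hs := g_sum1 ai bi aj bj r; rewrite !big_bool /= in hs.
have hs' := g_sum1 ai' bi' aj' bj' r'; rewrite !big_bool /= in hs'.
have s1 := sq2 (hh true false) (hh false false).
have s2 := sq2 (hh false true) (hh false false).
have s3 := sq4 (hh true true) (hh true false) (hh false true) (hh false false).
rewrite -hU in s1; rewrite -hV in s2; rewrite -hW in s3.
have k1 := kl true true; have k2 := kl true false; have k3 := kl false true; have k4 := kl false false.
have d1 := ld true true; have d2 := ld true false; have d3 := ld false true; have d4 := ld false false.
rewrite /E2 !big_bool /=.
move: hs hs' k1 k2 k3 k4 d1 d2 d3 d4 s1 s2 s3.
rewrite /qq /pp.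
set P11 := g true true ai bi aj bj r.
set P10 := g true false ai bi aj bj r.
set P01 := g false true ai bi aj bj r.
set P00 := g false false ai bi aj bj r.
set Q11 := g true true ai' bi' aj' bj' r'.
set Q10 := g true false ai' bi' aj' bj' r'.
set Q01 := g false true ai' bi' aj' bj' r'.
set Q00 := g false false ai' bi' aj' bj' r'.
set H11 := hh true true. set H10 := hh true false. set H01 := hh false true. set H00 := hh false false.
set c := c0 B.
move=> hs hs' k1 k2 k3 k4 d1 d2 d3 d4 s1 s2 s3.
set X := UU ^+ 2 + VV ^+ 2 + WW ^+ 2 in s1 s2 s3 *.
have : c ^+ 2 * X <= 8 * c ^+ 2 * (H11 ^+ 2 + H10 ^+ 2 + H01 ^+ 2 + H00 ^+ 2).
  have : X <= 8 * (H11 ^+ 2 + H10 ^+ 2 + H01 ^+ 2 + H00 ^+ 2) by rewrite /X; nra.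
  move=> hX; rewrite -mulrA mulrCA ler_pM2l //; exact: exprn_gt0.
move=> hX.
lra.
Qed.
End Dyad.

Lemma sum_ind (R : realType) (I : finType) (j : I) (F : I -> R) :
  \sum_i (j == i)%:R * F i = F j.
Proof.
rewrite (bigD1 j) //= eqxx mul1r big1 ?addr0 // => i hi.
by rewrite eq_sym (negbTE hi) mul0r.
Qed.

Lemma collect (R : realType) n (w : 'I_n -> R) (A B : 'I_n * 'I_n -> R) :
  \sum_i w i * \sum_(m | up m) ((m.1 == i)%:R * A m + (m.2 == i)%:R * B m) =
  \sum_(m | up m) (w m.1 * A m + w m.2 * B m).
Proof.
under eq_bigr do rewrite mulr_sumr.
rewrite exchange_big /=; apply: eq_bigr => m _.
under eq_bigr do rewrite mulrDr.
rewrite big_split /=; congr (_ + _).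
  by rewrite -(sum_ind m.1 (fun i => w i * A m)); apply: eq_bigr => i _; rewrite mulrCA.
by rewrite -(sum_ind m.2 (fun i => w i * B m)); apply: eq_bigr => i _; rewrite mulrCA.
Qed.

Lemma sym_split (R : realType) n (F : 'I_n * 'I_n -> R) :
  \sum_m F m = \sum_(m | up m) F m + \sum_(m | up m) F (sw m) + \sum_i F (i, i).
Proof.
rewrite (bigID (@up n)) /= -addrA; congr (_ + _).
rewrite (bigID (fun m : 'I_n * 'I_n => m.1 == m.2)) /= addrC; congr (_ + _).
  rewrite (reindex_inj (can_inj (@swK n))) /=; apply: eq_bigl => -[i j] /=.
  rewrite /up /= -leqNgt ltn_neqAle andbC eq_sym; congr (_ && _).
rewrite (eq_bigr (fun i => \sum_(j | j == i) F (i, j))); last by move=> i _; rewrite big_pred1_eq.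
rewrite pair_big_dep /=; apply: eq_big => -[i j] /=.
  rewrite /up /=; case: (i =P j) => [->|]; first by rewrite ltnn eqxx.
  by rewrite andbF; case: (j =P i) => // -> .
by [].
Qed.

Lemma lin3 (R : realType) n (a b c : R) (f : 'I_n -> R) :
  \sum_i (a + b * f i + c * f i ^+ 2) = n%:R * a + b * \sum_i f i + c * \sum_i f i ^+ 2.
Proof. by rewrite !big_split /= -!mulr_sumr sumr_const card_ord mulr_natl. Qed.

Lemma sq_sum_id (R : realType) n (u v : 'I_n -> R) : (0 < n)%N ->
  \sum_i \sum_j (u i + v j) ^+ 2 =
  n%:R * \sum_i (u i - n%:R^-1 * \sum_k u k) ^+ 2 +
  n%:R * \sum_j (v j - n%:R^-1 * \sum_k v k) ^+ 2 +
  n%:R ^+ 2 * (n%:R^-1 * \sum_k u k + n%:R^-1 * \sum_k v k) ^+ 2.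
Proof.
move=> n0.
have nz : (n%:R : R) != 0 by rewrite pnatr_eq0 -lt0n.
set Su := \sum_k u k; set Sv := \sum_k v k.
have e1 c : \sum_i (u i - c) ^+ 2 = n%:R * c ^+ 2 + (- 2 * c) * Su + 1 * \sum_i u i ^+ 2.
  by rewrite -lin3; apply: eq_bigr => i _; ring.
have e2 c : \sum_i (v i - c) ^+ 2 = n%:R * c ^+ 2 + (- 2 * c) * Sv + 1 * \sum_i v i ^+ 2.
  by rewrite -lin3; apply: eq_bigr => i _; ring.
have e3 : \sum_i \sum_j (u i + v j) ^+ 2 =
   \sum_i (\sum_j v j ^+ 2 + (2 * Sv) * u i + n%:R * u i ^+ 2).
  apply: eq_bigr => i _.
  rewrite (eq_bigr (fun j => u i ^+ 2 + (2 * u i) * v j + 1 * v j ^+ 2)); last by move=> j _; ring.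
  rewrite lin3 -/Sv; ring.
rewrite e3 lin3 e1 e2 -/Su.
by field.
Qed.

Lemma prod_bound (R : realType) (B s x y : R) : 0 < B -> 0 < s -> `|x| <= 2 * B ->
  x * y <= B * s + B / s * y ^+ 2.
Proof.
move=> B0 s0 hx.
have h1 : x * y <= 2 * B * `|y|.
  apply: (le_trans (ler_norm _)); rewrite normrM; apply: ler_wpM2r => //.
have hy : y ^+ 2 = `|y| ^+ 2 by rewrite real_normK ?num_real.
have h2 : 2 * B * `|y| <= B * s + B / s * `|y| ^+ 2.
  rewrite -subr_ge0.
  have -> : B * s + B / s * `|y| ^+ 2 - 2 * B * `|y| = B / s * (`|y| - s) ^+ 2.
    by field; rewrite gt_eqF.
  by apply: mulr_ge0; [rewrite divr_ge0 ?ltW | exact: sqr_ge0].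
by rewrite hy; apply: (le_trans h1).
Qed.

Section Det.
Variables (R : realType) (B : R) (n : nat) (al be al' be' : 'I_n -> R) (rh rh' : R).
Hypotheses (hB : 0 < B) (hal : forall i, `|al i| <= B) (hbe : forall i, `|be i| <= B) (hrh : `|rh| <= B)
  (hal' : forall i, `|al' i| <= B) (hbe' : forall i, `|be' i| <= B) (hrh' : `|rh'| <= B).
Notation K := ('I_n * 'I_n)%type.

Definition mu (m : K) (f : bool -> bool -> R) := E2 (al m.1) (be m.1) (al m.2) (be m.2) rh f.
Definition Zf m f x y := f x y - mu m f.
Definition fx : bool -> bool -> R := fun x _ => b2R R x.
Definition fy : bool -> bool -> R := fun _ y => b2R R y.
Definition fxy : bool -> bool -> R := fun x y => b2R R x * b2R R y.
Definition Si (a : net n) i := \sum_(m | up m) ((m.1 == i)%:R * Zf m fx (a m) (a (sw m)) + (m.2 == i)%:R * Zf m fy (a m) (a (sw m))).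
Definition Ti (a : net n) i := \sum_(m | up m) ((m.1 == i)%:R * Zf m fy (a m) (a (sw m)) + (m.2 == i)%:R * Zf m fx (a m) (a (sw m))).
Definition Rr (a : net n) := \sum_(m | up m) Zf m fxy (a m) (a (sw m)).
Definition W2 a := \sum_i Si a i ^+ 2 + \sum_i Ti a i ^+ 2 + Rr a ^+ 2.
Definition uu i := al' i - al i.
Definition vv i := be' i - be i.
Definition ww := rh' - rh.
Definition hm (m : K) x y := hh (al m.1) (be m.1) (al m.2) (be m.2) rh (al' m.1) (be' m.1) (al' m.2) (be' m.2) rh' x y.

Lemma loglik_up (a1 b1 : 'I_n -> R) r1 a :
  loglik a1 b1 r1 a = \sum_(m : K | up m) ln (g (a m) (a (sw m)) (a1 m.1) (b1 m.1) (a1 m.2) (b1 m.2) r1).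
Proof. by rewrite /loglik pair_big_dep /=; apply: eq_big => [[i j] // | [i j] _]. Qed.

Lemma det_main a s : loglik al be rh a <= loglik al' be' rh' a -> 0 < s ->
  c0 B ^+ 2 / 32 * \sum_(m | up m) ((uu m.1 + vv m.2) ^+ 2 + (vv m.1 + uu m.2) ^+ 2 + ww ^+ 2)
  <= B * (2 * n%:R + 1) * s + B / s * W2 a.
Proof.
move=> hmle s0.
have h0 : 0 <= \sum_(m | up m) hm m (a m) (a (sw m)).
  by rewrite /hm /hh /qq /pp sumrB -!loglik_up subr_ge0.
have kl m : E2 (al m.1) (be m.1) (al m.2) (be m.2) rh (hm m) <=
    - (c0 B ^+ 2 / 32) * ((uu m.1 + vv m.2) ^+ 2 + (vv m.1 + uu m.2) ^+ 2 + ww ^+ 2).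
  exact: kl_bound.
have dv m : hm m (a m) (a (sw m)) - E2 (al m.1) (be m.1) (al m.2) (be m.2) rh (hm m) =
   uu m.1 * Zf m fx (a m) (a (sw m)) + uu m.2 * Zf m fy (a m) (a (sw m))
 + (vv m.1 * Zf m fy (a m) (a (sw m)) + vv m.2 * Zf m fx (a m) (a (sw m)))
 + ww * Zf m fxy (a m) (a (sw m)).
  rewrite /hm dev_id /Zf /mu /fx /fy /fxy /UU /VV /WW /uu /vv /ww; ring.
have hdev : \sum_(m | up m) (hm m (a m) (a (sw m)) - E2 (al m.1) (be m.1) (al m.2) (be m.2) rh (hm m))
   = \sum_i uu i * Si a i + \sum_i vv i * Ti a i + ww * Rr a.
  under eq_bigr do rewrite dv.
  rewrite /Si /Ti /Rr !collect mulr_sumr -!big_split /=.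
  by apply: eq_bigr.
have hE : \sum_(m | up m) E2 (al m.1) (be m.1) (al m.2) (be m.2) rh (hm m) <=
   - (c0 B ^+ 2 / 32 * \sum_(m | up m) ((uu m.1 + vv m.2) ^+ 2 + (vv m.1 + uu m.2) ^+ 2 + ww ^+ 2)).
  rewrite mulr_sumr -sumrN; apply: ler_sum => m _; rewrite -mulNr; exact: kl.
have hsplit : \sum_(m | up m) hm m (a m) (a (sw m)) =
   \sum_(m | up m) (hm m (a m) (a (sw m)) - E2 (al m.1) (be m.1) (al m.2) (be m.2) rh (hm m))
   + \sum_(m | up m) E2 (al m.1) (be m.1) (al m.2) (be m.2) rh (hm m).
  by rewrite -big_split /=; apply: eq_bigr => m _; rewrite subrK.
have bu : \sum_i uu i * Si a i <= n%:R * (B * s) + B / s * \sum_i Si a i ^+ 2.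
  have cst : \sum_(i < n) (B * s) = n%:R * (B * s) by rewrite sumr_const card_ord mulr_natl.
  rewrite mulr_sumr -cst -big_split /=.
  apply: ler_sum => i _; apply: prod_bound => //.
  rewrite /uu (le_trans (ler_normB _ _)) //; have := hal i; have := hal' i; lra.
have bv : \sum_i vv i * Ti a i <= n%:R * (B * s) + B / s * \sum_i Ti a i ^+ 2.
  have cst : \sum_(i < n) (B * s) = n%:R * (B * s) by rewrite sumr_const card_ord mulr_natl.
  rewrite mulr_sumr -cst -big_split /=.
  apply: ler_sum => i _; apply: prod_bound => //.
  rewrite /vv (le_trans (ler_normB _ _)) //; have := hbe i; have := hbe' i; lra.
have bw : ww * Rr a <= B * s + B / s * Rr a ^+ 2.
  apply: prod_bound => //.
  rewrite /ww (le_trans (ler_normB _ _)) //; have := hrh; have := hrh'; lra.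
rewrite /W2; lra.
Qed.

Lemma lhs_id : \sum_(m | up m) ((uu m.1 + vv m.2) ^+ 2 + (vv m.1 + uu m.2) ^+ 2 + ww ^+ 2) =
  \sum_i \sum_j (uu i + vv j) ^+ 2 - \sum_i (uu i + vv i) ^+ 2 + (n%:R ^+ 2 - n%:R) / 2 * ww ^+ 2.
Proof.
have e1 := sym_split (fun m : K => (uu m.1 + vv m.2) ^+ 2).
have e2 := sym_split (fun m : K => ww ^+ 2).
rewrite /= in e1 e2.
rewrite -(pair_bigA _ (fun i j => (uu i + vv j) ^+ 2)) /= in e1.
have cn : \sum_(i < n) ww ^+ 2 = n%:R * ww ^+ 2 by rewrite sumr_const card_ord mulr_natl.
rewrite cn sumr_const card_prod card_ord -[ww ^+ 2 *+ (n * n)]mulr_natl natrM in e2.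
rewrite !big_split /= e1.
have -> : \sum_(m | up m) (vv m.1 + uu m.2) ^+ 2 = \sum_(m | up m) (uu (sw m).1 + vv (sw m).2) ^+ 2.
  by apply: eq_bigr => m _; rewrite addrC.
move: e2; set S := \sum_(m | up m) ww ^+ 2 => e2.
have hS : S + S = n%:R * n%:R * ww ^+ 2 - n%:R * ww ^+ 2 by rewrite e2; ring.
have -> : S = (n%:R ^+ 2 - n%:R) / 2 * ww ^+ 2.
  have -> : S = (S + S) / 2 by field.
  by rewrite hS; field.
ring.
Qed.

Lemma det_final a (K' : R) : (2 <= n)%N -> 0 <= K' ->
  loglik al be rh a <= loglik al' be' rh' a -> W2 a <= K' * n%:R ^+ 2 ->
  let s := Num.sqrt (n%:R : R) in
  let C := B * (3 + K') / (c0 B ^+ 2 / 32) + 16 * B ^+ 2 in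
  [/\ ww ^+ 2 <= 4 * C / s,
      (n%:R^-1 * \sum_i uu i + n%:R^-1 * \sum_i vv i) ^+ 2 <= C / s &
      \sum_i (uu i - n%:R^-1 * \sum_k uu k) ^+ 2 + \sum_i (vv i - n%:R^-1 * \sum_k vv k) ^+ 2 <= C * s].
Proof.
move=> n2 K0 hmle hW s C.
have n0 : (0 < n)%N by apply: leq_trans n2.
have s0 : 0 < s by rewrite sqrtr_gt0 ltr0n.
have ss : s ^+ 2 = n%:R by rewrite sqr_sqrtr ?ler0n.
have s2 : 2 <= s ^+ 2 by rewrite ss ler_nat.
have s1 : 1 <= s by nra.
clearbody s.
have k0 : 0 < c0 B ^+ 2 / 32 by rewrite divr_gt0 ?exprn_gt0 ?c0_gt0.
have hd := det_main hmle s0.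
rewrite lhs_id sq_sum_id // in hd.
set Vu := \sum_i (uu i - _) ^+ 2 in hd *.
set Vv := \sum_i (vv i - _) ^+ 2 in hd *.
set m2 := (n%:R^-1 * _ + _) ^+ 2 in hd *.
have Vu0 : 0 <= Vu by apply: sumr_ge0 => i _; exact: sqr_ge0.
have Vv0 : 0 <= Vv by apply: sumr_ge0 => i _; exact: sqr_ge0.
have m20 : 0 <= m2 by exact: sqr_ge0.
have w0 : 0 <= ww ^+ 2 by exact: sqr_ge0.
have hdiag : \sum_i (uu i + vv i) ^+ 2 <= n%:R * (16 * B ^+ 2).
  have cst : \sum_(i < n) (16 * B ^+ 2) = n%:R * (16 * B ^+ 2) by rewrite sumr_const card_ord [RHS]mulr_natl.
  rewrite -cst; apply: ler_sum => i _.
  have := hal i; have := hal' i; have := hbe i; have := hbe' i.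
  move=> /ler_normlP[? ?] /ler_normlP[? ?] /ler_normlP[? ?] /ler_normlP[? ?]; rewrite /uu /vv.
  nra.
have hW' : B / s * W2 a <= B * K' * s ^+ 3.
  have -> : B * K' * s ^+ 3 = B / s * (K' * s ^+ 4) by field; rewrite gt_eqF.
  rewrite ler_pM2l ?divr_gt0 //.
  by rewrite -ss -exprM in hW; move: hW; rewrite (_ : (2 * 2)%N = 4%N).
rewrite -ss in hd hdiag.
have key : s ^+ 2 * Vu + s ^+ 2 * Vv + s ^+ 2 ^+ 2 * m2 + (s ^+ 2 ^+ 2 - s ^+ 2) / 2 * ww ^+ 2
   <= C * s ^+ 3.
  have h3 : B * (2 * s ^+ 2 + 1) * s <= 3 * B * s ^+ 3.
    have t : 0 <= B * s * (s ^+ 2 - 1).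
      by apply: mulr_ge0; [apply: mulr_ge0; exact: ltW | rewrite subr_ge0; lra].
    have -> : 3 * B * s ^+ 3 = B * (2 * s ^+ 2 + 1) * s + B * s * (s ^+ 2 - 1) by ring.
    lra.
  have : c0 B ^+ 2 / 32 * (s ^+ 2 * Vu + s ^+ 2 * Vv + s ^+ 2 ^+ 2 * m2 + (s ^+ 2 ^+ 2 - s ^+ 2) / 2 * ww ^+ 2)
     <= c0 B ^+ 2 / 32 * (B * (3 + K') / (c0 B ^+ 2 / 32) * s ^+ 3 + s ^+ 2 * (16 * B ^+ 2)).
    have e : c0 B ^+ 2 / 32 * (B * (3 + K') / (c0 B ^+ 2 / 32) * s ^+ 3 + s ^+ 2 * (16 * B ^+ 2))
       = B * (3 + K') * s ^+ 3 + c0 B ^+ 2 / 32 * (s ^+ 2 * (16 * B ^+ 2)).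
      by field; rewrite gt_eqF // c0_gt0.
    rewrite e.
    move: hd h3 hW' hdiag; set kk := c0 B ^+ 2 / 32 => hd h3 hW' hdiag.
    have : kk * \sum_i (uu i + vv i) ^+ 2 <= kk * (s ^+ 2 * (16 * B ^+ 2)) by rewrite ler_pM2l.
    move: hd; set Dg := \sum_i (uu i + vv i) ^+ 2 => hd hk.
    lra.
  rewrite ler_pM2l // => h.
  apply: (le_trans h); rewrite /C [X in _ <= X]mulrDl lerD2l.
  have t : 0 <= 16 * B ^+ 2 * s ^+ 2 * (s - 1).
    apply: mulr_ge0; last by lra.
    by rewrite !mulr_ge0 // ?exprn_ge0 // ltW.
  have -> : 16 * B ^+ 2 * s ^+ 3 = s ^+ 2 * (16 * B ^+ 2) + 16 * B ^+ 2 * s ^+ 2 * (s - 1) by ring.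
  lra.
have C0 : 0 <= C.
  rewrite /C; apply: addr_ge0; last by rewrite mulr_ge0 ?exprn_ge0 // ltW.
  by apply: divr_ge0; [apply: mulr_ge0; [exact: ltW | lra] | exact: ltW].
split.
- have h4 : s ^+ 2 ^+ 2 / 4 * ww ^+ 2 <= C * s ^+ 3.
    apply: le_trans key.
    have : s ^+ 2 ^+ 2 / 4 * ww ^+ 2 <= (s ^+ 2 ^+ 2 - s ^+ 2) / 2 * ww ^+ 2.
      apply: ler_wpM2r => //.
      have : 0 <= s ^+ 2 * (s ^+ 2 - 2) by apply: mulr_ge0; lra.
      lra.
    have : 0 <= s ^+ 2 * Vu + s ^+ 2 * Vv + s ^+ 2 ^+ 2 * m2.
      by rewrite !addr_ge0 // mulr_ge0 // exprn_ge0 // ?exprn_ge0 // ltW.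
    lra.
  rewrite ler_pdivlMr //.
  have -> : ww ^+ 2 * s = (s ^+ 2 ^+ 2 / 4 * ww ^+ 2) * (4 / s ^+ 3) by field; rewrite gt_eqF.
  have -> : 4 * C = C * s ^+ 3 * (4 / s ^+ 3) by field; rewrite gt_eqF.
  by rewrite ler_wpM2r // divr_ge0 // exprn_ge0 // ltW.
- have h4 : s ^+ 2 ^+ 2 * m2 <= C * s ^+ 3.
    apply: le_trans key.
    have : 0 <= (s ^+ 2 ^+ 2 - s ^+ 2) / 2 * ww ^+ 2.
      apply: mulr_ge0 => //; apply: divr_ge0 => //.
      have : 0 <= s ^+ 2 * (s ^+ 2 - 1) by apply: mulr_ge0; lra.
      lra.
    have : 0 <= s ^+ 2 * Vu + s ^+ 2 * Vv by rewrite addr_ge0 // mulr_ge0 // exprn_ge0 // ltW.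
    lra.
  rewrite ler_pdivlMr //.
  have -> : m2 * s = (s ^+ 2 ^+ 2 * m2) / s ^+ 3 by field; rewrite gt_eqF.
  by rewrite ler_pdivrMr ?exprn_gt0 // mulrC.
- have h4 : s ^+ 2 * (Vu + Vv) <= C * s ^+ 3.
    apply: le_trans key.
    have : 0 <= (s ^+ 2 ^+ 2 - s ^+ 2) / 2 * ww ^+ 2.
      apply: mulr_ge0 => //; apply: divr_ge0 => //.
      have : 0 <= s ^+ 2 * (s ^+ 2 - 1) by apply: mulr_ge0; lra.
      lra.
    have : 0 <= s ^+ 2 ^+ 2 * m2 by rewrite mulr_ge0 // !exprn_ge0 // ltW.
    lra.
  have e : C * s ^+ 3 = s ^+ 2 * (C * s) by ring.
  by rewrite e ler_pM2l ?exprn_gt0 in h4.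
Qed.
End Det.

Section Prob.
Variables (R : realType) (n : nat) (al be : 'I_n -> R) (rh : R).
Notation K := ('I_n * 'I_n)%type.
Notation P := (netP al be rh).

Lemma bsum4 (F : bool -> bool -> R) : \sum_x \sum_y F x y = F true true + F true false + (F false true + F false false).
Proof. by rewrite !big_bool. Qed.

Lemma gm_facts (m : K) : [/\ 0 <= gm al be rh m true true, 0 <= gm al be rh m true false,
  0 <= gm al be rh m false true, 0 <= gm al be rh m false false &
  gm al be rh m true true + gm al be rh m true false + (gm al be rh m false true + gm al be rh m false false) = 1].
Proof.
have := g_sum1 (al m.1) (be m.1) (al m.2) (be m.2) rh; rewrite bsum4 => h.
by split => //; apply/ltW/g_gt0.
Qed.

Lemma mu_Zf (m : K) f : \sum_x \sum_y gm al be rh m x y * Zf al be rh m f x y = 0.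
Proof.
rewrite /Zf /mu /E2 /pp !bsum4 -/(gm al be rh m true true) -/(gm al be rh m true false).
rewrite -/(gm al be rh m false true) -/(gm al be rh m false false).
case: (gm_facts m) => _ _ _ _ h.
set a := gm _ _ _ m true true in h *; set b := gm _ _ _ m true false in h *.
set c := gm _ _ _ m false true in h *; set d := gm _ _ _ m false false in h *.
have -> : d = 1 - a - b - c by lra.
ring.
Qed.

Lemma E_le (m : K) (phi : bool -> bool -> R) c : (forall x y, phi x y <= c) ->
  \sum_x \sum_y gm al be rh m x y * phi x y <= c.
Proof.
move=> hp; rewrite bsum4; case: (gm_facts m) => h1 h2 h3 h4 h.
have := hp true true; have := hp true false; have := hp false true; have := hp false false.
move: h1 h2 h3 h4 h.
set a := gm _ _ _ m true true; set b := gm _ _ _ m true false.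
set c' := gm _ _ _ m false true; set d := gm _ _ _ m false false.
move=> h1 h2 h3 h4 h e4 e3 e2 e1.
nra.
Qed.

Lemma mu_01 (m : K) f : (forall x y, 0 <= f x y <= 1) -> 0 <= mu al be rh m f <= 1.
Proof.
move=> hf; rewrite /mu /E2 /pp !bsum4.
case: (gm_facts m) => h1 h2 h3 h4 h.
move: h1 h2 h3 h4 h (hf true true) (hf true false) (hf false true) (hf false false).
rewrite /gm.
set a := g true true _ _ _ _ _; set b := g true false _ _ _ _ _.
set c' := g false true _ _ _ _ _; set d := g false false _ _ _ _ _.
move=> h1 h2 h3 h4 h /andP[e1 e1'] /andP[e2 e2'] /andP[e3 e3'] /andP[e4 e4'].
apply/andP; split; nra.
Qed.

Lemma Zf_sq (m : K) f x y : (forall x y, 0 <= f x y <= 1) -> Zf al be rh m f x y ^+ 2 <= 1.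
Proof.
move=> hf; have /andP[a1 a2] := mu_01 m hf; have /andP[b1 b2] := hf x y.
rewrite /Zf; nra.
Qed.

Lemma fx01 : forall x y, 0 <= @fx R x y <= 1.
Proof. by move=> [] [] /=; rewrite /fx ?b2RT ?b2RF ler01 lexx. Qed.
Lemma fy01 : forall x y, 0 <= @fy R x y <= 1.
Proof. by move=> [] [] /=; rewrite /fy ?b2RT ?b2RF ler01 lexx. Qed.
Lemma fxy01 : forall x y, 0 <= @fxy R x y <= 1.
Proof. by move=> [] [] /=; rewrite /fxy ?b2RT ?b2RF ?mulr1 ?mulr0 ?mul0r ler01 lexx. Qed.

Lemma ind_sq (b : bool) : (b%:R : R) ^+ 2 = b%:R.
Proof. by case: b; rewrite ?expr1n ?expr0n. Qed.

Lemma sqD2 (a b : R) : (a + b) ^+ 2 <= 2 * a ^+ 2 + 2 * b ^+ 2.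
Proof.
rewrite -subr_ge0; have -> : 2 * a ^+ 2 + 2 * b ^+ 2 - (a + b) ^+ 2 = (a - b) ^+ 2 by ring.
exact: sqr_ge0.
Qed.

Lemma pt_bound (c1 c2 : bool) (A Bv : R) : A ^+ 2 <= 1 -> Bv ^+ 2 <= 1 ->
  (c1%:R * A + c2%:R * Bv) ^+ 2 <= 2 * c1%:R + 2 * c2%:R.
Proof.
move=> hA hB; apply: (le_trans (sqD2 _ _)).
rewrite !exprMn !ind_sq.
have h1 : (c1%:R : R) * A ^+ 2 <= c1%:R by case: c1; rewrite ?mul1r ?mul0r.
have h2 : (c2%:R : R) * Bv ^+ 2 <= c2%:R by case: c2; rewrite ?mul1r ?mul0r.
lra.
Qed.

Lemma sum_up_const (c : R) : 0 <= c -> \sum_(m : K | up m) c <= n%:R ^+ 2 * c.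
Proof.
move=> c0.
have e : \sum_(m : K) c = n%:R ^+ 2 * c by rewrite sumr_const card_prod card_ord -[c *+ _]mulr_natl natrM expr2.
rewrite -e [X in _ <= X](bigID (@up n)) /= lerDl.
by apply: sumr_ge0.
Qed.

Lemma ES_gen (sel1 sel2 : K -> 'I_n -> bool) (F1 F2 : bool -> bool -> R) :
  (forall x y, 0 <= F1 x y <= 1) -> (forall x y, 0 <= F2 x y <= 1) ->
  (forall m, \sum_i (sel1 m i)%:R = 1 :> R) -> (forall m, \sum_i (sel2 m i)%:R = 1 :> R) ->
  \sum_i \sum_a P a * (\sum_(m | up m) ((sel1 m i)%:R * Zf al be rh m F1 (a m) (a (sw m))
       + (sel2 m i)%:R * Zf al be rh m F2 (a m) (a (sw m)))) ^+ 2 <= 4 * n%:R ^+ 2.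
Proof.
move=> h1 h2 s1 s2.
pose Z i m x y := (sel1 m i)%:R * Zf al be rh m F1 x y + (sel2 m i)%:R * Zf al be rh m F2 x y.
have hE i : \sum_a P a * (\sum_(m | up m) ((sel1 m i)%:R * Zf al be rh m F1 (a m) (a (sw m))
       + (sel2 m i)%:R * Zf al be rh m F2 (a m) (a (sw m)))) ^+ 2 =
    \sum_(m | up m) \sum_x \sum_y gm al be rh m x y * Z i m x y ^+ 2.
  apply: (@E_var R n al be rh (Z i)) => m _.
  rewrite /Z.
  have -> : \sum_x \sum_y gm al be rh m x y * ((sel1 m i)%:R * Zf al be rh m F1 x y + (sel2 m i)%:R * Zf al be rh m F2 x y)
     = (sel1 m i)%:R * (\sum_x \sum_y gm al be rh m x y * Zf al be rh m F1 x y)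
       + (sel2 m i)%:R * (\sum_x \sum_y gm al be rh m x y * Zf al be rh m F2 x y).
    by rewrite !bsum4; ring.
  by rewrite !mu_Zf !mulr0 addr0.
rewrite (eq_bigr _ (fun i _ => hE i)) exchange_big /=.
have hb m i : \sum_x \sum_y gm al be rh m x y * Z i m x y ^+ 2 <= 2 * (sel1 m i)%:R + 2 * (sel2 m i)%:R.
  apply: E_le => x y; apply: pt_bound; exact: Zf_sq.
apply: (le_trans (ler_sum _ (fun m _ => ler_sum _ (fun i _ => hb m i)))).
have e m : \sum_i (2 * (sel1 m i)%:R + 2 * (sel2 m i)%:R) = 4 :> R.
  by rewrite big_split /= -!mulr_sumr s1 s2; ring.
rewrite (eq_bigr _ (fun m _ => e m)).
by rewrite mulrC; apply: sum_up_const.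
Qed.
End Prob.

Section Prob2.
Variables (R : realType) (n : nat) (al be : 'I_n -> R) (rh : R).
Notation K := ('I_n * 'I_n)%type.
Notation P := (netP al be rh).

Lemma EW2 : \sum_a P a * W2 al be rh a <= 9 * n%:R ^+ 2.
Proof.
have s1 (m : K) : \sum_i (m.1 == i)%:R = 1 :> R.
  by have := sum_ind m.1 (fun _ => 1 : R); under eq_bigr do rewrite mulr1.
have s2 (m : K) : \sum_i (m.2 == i)%:R = 1 :> R.
  by have := sum_ind m.2 (fun _ => 1 : R); under eq_bigr do rewrite mulr1.
have hS := @ES_gen R n al be rh (fun m i => m.1 == i) (fun m i => m.2 == i) (@fx R) (@fy R) (@fx01 R) (@fy01 R) s1 s2.
have hT := @ES_gen R n al be rh (fun m i => m.1 == i) (fun m i => m.2 == i) (@fy R) (@fx R) (@fy01 R) (@fx01 R) s1 s2.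
have hR : \sum_a P a * Rr al be rh a ^+ 2 <= n%:R ^+ 2.
  rewrite /Rr (@E_var R n al be rh (fun m x y => Zf al be rh m (@fxy R) x y)); last by move=> m _; exact: mu_Zf.
  apply: (le_trans (ler_sum _ (fun m _ => @E_le R n al be rh m _ 1 (fun x y => @Zf_sq R n al be rh m (@fxy R) x y (@fxy01 R))))).
  by rewrite -[X in _ <= X]mulr1; apply: sum_up_const.
rewrite /W2.
have -> : \sum_a P a * (\sum_i Si al be rh a i ^+ 2 + \sum_i Ti al be rh a i ^+ 2 + Rr al be rh a ^+ 2)
  = \sum_i \sum_a P a * Si al be rh a i ^+ 2 + \sum_i \sum_a P a * Ti al be rh a i ^+ 2
    + \sum_a P a * Rr al be rh a ^+ 2.
  rewrite (eq_bigr (fun a => \sum_i P a * Si al be rh a i ^+ 2 + \sum_i P a * Ti al be rh a i ^+ 2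
     + P a * Rr al be rh a ^+ 2)); last by move=> a _; rewrite !mulrDr !mulr_sumr.
  by rewrite !big_split /=; congr (_ + _ + _); exact: exchange_big.
move: hS hT; rewrite /Si /Ti => hS hT.
lra.
Qed.

Lemma markov (t : R) (X : net n -> R) : 0 < t -> (forall a, 0 <= X a) ->
  \sum_(a | t < X a) P a <= (\sum_a P a * X a) / t.
Proof.
move=> t0 hX; rewrite ler_pdivlMr // mulr_suml.
apply: (@le_trans _ _ (\sum_(a | t < X a) P a * X a)).
  apply: ler_sum => a ha; apply: ler_wpM2l; [exact: netP_ge0 | exact: ltW].
rewrite [X in _ <= X](bigID (fun a => t < X a)) /= lerDl.
apply: sumr_ge0 => a _; apply: mulr_ge0 => //; exact: netP_ge0.
Qed.
End Prob2.

Lemma bigOp_crit (R : realType) (Pn : forall n, net n -> R) (X : forall n, net n -> R) (r : nat -> R)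
  (Y : forall n, net n -> R) :
  (forall n a, 0 <= Pn n a) -> (forall n a, 0 <= Y n a) ->
  (forall n, \sum_a Pn n a * Y n a <= 9 * n%:R ^+ 2) ->
  (forall K' : R, 0 < K' -> exists M : R, forall n a, (2 <= n)%N -> Y n a <= K' * n%:R ^+ 2 ->
     `|X n a| <= M * r n) ->
  bigOp Pn X r.
Proof.
move=> hP hY hE hcrit eps e0.
have K0 : 0 < 18 / eps by rewrite divr_gt0.
have [M hM] := hcrit _ K0.
exists M, 2%N => n n2.
have n0 : (0 : R) < n%:R ^+ 2 by rewrite exprn_gt0 // ltr0n (leq_trans _ n2).
have t0 : 0 < 18 / eps * n%:R ^+ 2 by rewrite mulr_gt0.
apply: (@le_lt_trans _ _ (\sum_(a | 18 / eps * n%:R ^+ 2 < Y n a) Pn n a)).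
  rewrite [X in _ <= X]big_mkcond [X in X <= _]big_mkcond /=.
  apply: ler_sum => a _.
  case: ifP => h1; case: ifP => h2 //.
  exfalso; move/negbT: h2; rewrite -leNgt => h2.
  by move: h1; rewrite ltNge (hM n a n2 h2).
apply: (@le_lt_trans _ _ ((\sum_a Pn n a * Y n a) / (18 / eps * n%:R ^+ 2))).
  rewrite ler_pdivlMr // mulr_suml.
  apply: (@le_trans _ _ (\sum_(a | 18 / eps * n%:R ^+ 2 < Y n a) Pn n a * Y n a)).
    by apply: ler_sum => a ha; apply: ler_wpM2l => //; exact: ltW.
  rewrite [X in _ <= X](bigID (fun a => 18 / eps * n%:R ^+ 2 < Y n a)) /= lerDl.
  by apply: sumr_ge0 => a _; apply: mulr_ge0.
rewrite ltr_pdivrMr //.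
apply: (le_lt_trans (hE n)).
have -> : eps * (18 / eps * n%:R ^+ 2) = 18 * n%:R ^+ 2 by field; rewrite gt_eqF.
by rewrite ltr_pM2r // ltr_nat.
Qed.

Lemma scale_ok (R : realType) (A s l rr : R) : 0 <= A -> 0 < s -> 0 < l -> l <= rr ->
  A / s <= A / l * (rr / s).
Proof.
move=> A0 s0 l0 hl.
have -> : A / l * (rr / s) = A / s * (rr / l) by ring.
have h1 : 1 <= rr / l by rewrite ler_pdivlMr // mul1r.
have h0 : 0 <= A / s by rewrite divr_ge0 // ltW.
by rewrite ler_peMr.
Qed.

Lemma scale_ok2 (R : realType) (A s l rr : R) : 0 <= A -> 0 <= s -> 0 < l -> l <= rr ->
  A * s <= A / l * (s * rr).
Proof.
move=> A0 s0 l0 hl.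
have -> : A / l * (s * rr) = A * s * (rr / l) by ring.
have h1 : 1 <= rr / l by rewrite ler_pdivlMr // mul1r.
have h0 : 0 <= A * s by rewrite mulr_ge0.
by rewrite ler_peMr.
Qed.

Unset Implicit Arguments.
Set Strict Implicit.

Theorem theorem1 (R : realType) (B : R) (hB : 0 < B)
  (alpha beta : forall n : nat, 'I_n -> R) (rho : R)
  (htrue : forall n : nat, in_param_space B (alpha n) (beta n) rho)
  (est : forall n : nat, net n -> param R n)
  (hmle : forall (n : nat) (a : net n), is_mle B a (est n a)) :
  let P := fun n (a : net n) => netP (alpha n) (beta n) rho a in
  let rate := fun n : nat => (ln (n%:R : R)) ^+ 2 in
  let dalpha := fun n (a : net n) =>
    n%:R^-1 * \sum_(i : 'I_n) ((est n a).1.1 i - alpha n i) in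
  let dbeta := fun n (a : net n) =>
    n%:R^-1 * \sum_(i : 'I_n) ((est n a).1.2 i - beta n i) in
  [/\ bigOp P (fun n a => ((est n a).2 - rho) ^+ 2)
             (fun n => rate n / Num.sqrt (n%:R)),
      bigOp P (fun n a => (dalpha n a + dbeta n a) ^+ 2)
             (fun n => rate n / Num.sqrt (n%:R)) &
      bigOp P (fun n a =>
               \sum_(i : 'I_n) ((est n a).1.1 i - alpha n i - dalpha n a) ^+ 2
             + \sum_(i : 'I_n) ((est n a).1.2 i - beta n i - dbeta n a) ^+ 2)
             (fun n => Num.sqrt (n%:R) * rate n)].
Proof.
move=> P rate dalpha dbeta.
have l2 : 0 < ln (2 : R) by apply: ln_gt0; rewrite ltr1n.
have hl n : (2 <= n)%N -> ln 2 ^+ 2 <= rate n.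
  move=> n2; rewrite /rate.
  have : ln (2 : R) <= ln (n%:R) by rewrite ler_ln ?posrE ?ltr0n ?ler_nat // (leq_trans _ n2).
  move=> h; have h0 : 0 <= ln (n%:R : R) by exact: (le_trans (ltW l2) h).
  by rewrite ler_sqr ?nnegrE // ltW.
have ell : 0 < ln (2 : R) ^+ 2 by rewrite exprn_gt0.
pose C (K' : R) := B * (3 + K') / (c0 B ^+ 2 / 32) + 16 * B ^+ 2.
have C0 K' : 0 < K' -> 0 <= C K'.
  move=> K0; rewrite /C; apply: addr_ge0; last by rewrite mulr_ge0 ?exprn_ge0 // ltW.
  apply: divr_ge0; [apply: mulr_ge0; [exact: ltW | lra] | ].
  by rewrite divr_ge0 ?exprn_ge0 // ltW // c0_gt0.
have common K' n a : 0 < K' -> (2 <= n)%N -> W2 (alpha n) (beta n) rho a <= K' * n%:R ^+ 2 ->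
  let s := Num.sqrt (n%:R : R) in
  [/\ ((est n a).2 - rho) ^+ 2 <= 4 * C K' / s,
      (dalpha n a + dbeta n a) ^+ 2 <= C K' / s &
      \sum_(i : 'I_n) ((est n a).1.1 i - alpha n i - dalpha n a) ^+ 2
             + \sum_(i : 'I_n) ((est n a).1.2 i - beta n i - dbeta n a) ^+ 2 <= C K' * s].
  move=> K0 n2 hW s.
  have [ha [hb [hr _]]] := htrue n.
  have [[ha' [hb' [hr' _]]] hm] := hmle n a.
  have hll := hm _ _ _ (htrue n).
  exact: (det_final hB ha hb hr ha' hb' hr' n2 (ltW K0) hll hW).
have hP n a : 0 <= P n a by exact: netP_ge0.
have hY n (a : net n) : 0 <= W2 (alpha n) (beta n) rho a.
  by rewrite /W2 !addr_ge0 ?sqr_ge0 //; apply: sumr_ge0 => i _; exact: sqr_ge0.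
have hE n : \sum_a P n a * W2 (alpha n) (beta n) rho a <= 9 * n%:R ^+ 2 by exact: EW2.
have s0 n : (2 <= n)%N -> 0 < Num.sqrt (n%:R : R) by move=> n2; rewrite sqrtr_gt0 ltr0n (leq_trans _ n2).
split; apply: (bigOp_crit (Y := fun n a => W2 (alpha n) (beta n) rho a)) => // K' K0;
  exists (4 * C K' / ln (2 : R) ^+ 2) => n a n2 hW;
  have [h1 h2 h3] := common K' n a K0 n2 hW;
  have hr := hl n n2; have sn := s0 n n2; have CK := C0 K' K0.
- rewrite ger0_norm ?sqr_ge0 //; apply: (le_trans h1); apply: scale_ok => //; exact: mulr_ge0.
- rewrite ger0_norm ?sqr_ge0 //; apply: (le_trans h2); apply: (le_trans _ (scale_ok _ sn ell hr)).
    by rewrite ler_pM2r ?invr_gt0 // ler_peMl //; lra.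
  by rewrite mulr_ge0.
- rewrite ger0_norm; last by rewrite addr_ge0 //; apply: sumr_ge0 => i _; exact: sqr_ge0.
  apply: (le_trans h3); apply: (le_trans _ (scale_ok2 _ (ltW sn) ell hr)).
    by rewrite ler_pM2r // ler_peMl //; lra.
  by rewrite mulr_ge0.
Qed.
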